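(* Let $p$ be an odd prime with $p\equiv 3\pmod 4$. Then for any odd Dirichlet characters $\chi_1,\chi_2$ modulo $p$ with $\chi_1\chi_2\neq\chi_0$, $$\sum_{a=0}^{p-1}\sum_{b=0}^{p-1}\sum_{c=0}^{p-1}\sum_{d=0}^{p-1}\overline{\chi_1}\,\overline{\chi_2}(a^5+b^5-c^5-d^5)\,\chi_1\chi_2(a+b-c-d)=0.$$
   Context: $\chi_0$ denotes the principal character modulo $p$. A character $\chi$ is odd if $\chi(-1)=-1$. Dirichlet characters modulo $p$ are extended by $\chi(x)=0$ when $p\mid x$, and $\overline{\chi}$ denotes the complex conjugate character; $\overline{\chi_1}\,\overline{\chi_2}(x)$ means $\overline{\chi_1}(x)\overline{\chi_2}(x)$. *)

(* Defs.v *)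
From HB Require Import structures.
From mathcomp Require Import all_boot all_order all_algebra all_field.
Set Implicit Arguments. Unset Strict Implicit. Unset Printing Implicit Defensive.
Import Order.TTheory GRing.Theory Num.Theory.
Local Open Scope ring_scope.

Definition dirichlet_char (q : nat) (chi : int -> algC) : Prop :=
  [/\ forall m n : int, chi (m * n) = chi m * chi n,
      forall n : int, chi (n + q%:Z) = chi n,
      chi 1 = 1
    & forall n : int, chi n = 0 <-> ~~ coprimez n q%:Z].

Definition principal_char (q : nat) (n : int) : algC :=
  if coprimez n q%:Z then 1 else 0.

Definition odd_char (chi : int -> algC) : Prop := chi (-1) = -1.

(* Main.v *)
Require Import Defs.
From mathcomp Require Import all_boot all_order all_algebra all_field all_fingroup all_solvable.
From mathcomp Require Import ring lra zify.
Import Order.TTheory GRing.Theory Num.Theory.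
Set Implicit Arguments. Unset Strict Implicit.
Local Open Scope ring_scope.

Lemma chi_per_nat q chi : dirichlet_char q chi ->
  forall (n : int) (j : nat), chi (n + j%:Z * q%:Z) = chi n.
Proof.
case=> _ hper _ _ n; elim=> [|j IH]; first by rewrite mul0r addr0.
have -> : n + j.+1%:Z * q%:Z = (n + j%:Z * q%:Z) + q%:Z.
  by rewrite -addn1 PoszD; ring.
by rewrite hper.
Qed.

Lemma chi_per q chi : dirichlet_char q chi ->
  forall (n k : int), chi (n + k * q%:Z) = chi n.
Proof.
move=> hc n [j|j]; first exact: chi_per_nat.
rewrite -(chi_per_nat hc (n + Negz j * q%:Z) j.+1); congr chi.
rewrite NegzE; ring.
Qed.

Lemma chi_dvd q chi : dirichlet_char q chi ->
  forall m n : int, (q%:Z %| m - n)%Z -> chi m = chi n.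
Proof.
move=> hc m n /divzK hd.
by rewrite -(chi_per hc n ((m - n) %/ q%:Z)%Z) hd addrC subrK.
Qed.

Lemma chi_modz q chi : dirichlet_char q chi ->
  forall m : int, chi m = chi (m %% q%:Z)%Z.
Proof.
move=> hc m; apply: (chi_dvd hc).
by rewrite -eqz_mod_dvd modz_mod.
Qed.

Lemma chi_X q chi : dirichlet_char q chi ->
  forall (m : int) k, chi (m ^+ k) = chi m ^+ k.
Proof.
case=> hm _ h1 _ m; elim=> [|k IH]; first by rewrite !expr0.
by rewrite !exprS hm IH.
Qed.

Lemma dvd_poly (p : int) (x y : int) k : (p %| x - y)%Z -> (p %| x ^+ k - y ^+ k)%Z.
Proof. by move=> h; rewrite subrXX dvdz_mulr. Qed.

Lemma PoszX' (a k : nat) : ((a ^ k)%N : int) = (a : int) ^+ k.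
Proof. by rewrite -!natz natrX. Qed.

Lemma modinj (p t a b : nat) : coprime t p -> (a < p)%N -> (b < p)%N ->
  ((t * a) %% p = (t * b) %% p)%N -> a = b.
Proof.
move=> cop; wlog ab : a b / (a <= b)%N.
  move=> H ap bp e; case: (leqP a b) => h; first exact: H.
  by symmetry; apply: H => //; apply: ltnW.
move=> ap bp /eqP e; move: e; rewrite eq_sym eqn_mod_dvd ?leq_mul2l ?ab ?orbT //.
rewrite -mulnBr Gauss_dvdr; last by rewrite coprime_sym.
move=> d; apply/eqP; rewrite eqn_leq ab /=.
case: (posnP (b - a)) => [/eqP|]; first by rewrite subn_eq0.
move=> h; have := dvdn_leq h d; lia.
Qed.

Lemma reidx (p t : nat) (f : nat -> algC) : (0 < p)%N -> coprime t p ->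
  \sum_(a < p) f a = \sum_(a < p) f ((t * a) %% p)%N.
Proof.
move=> p0 cop.
pose h (a : 'I_p) : 'I_p := Ordinal (ltn_pmod (t * a) p0).
have hinj : injective h.
  move=> a b /(congr1 val) /= hab; apply/val_inj => /=.
  exact: (modinj cop (ltn_ord a) (ltn_ord b) hab).
by rewrite (reindex_inj hinj).
Qed.

Lemma chi_fermat q chi (t : nat) : prime q -> dirichlet_char q chi -> coprime t q ->
  chi t ^+ q.-1 = 1.
Proof.
move=> pq hc cop.
have e := Euler_exp_totient cop; rewrite totient_prime // in e.
case: (hc) => _ _ h1 _.
rewrite -(chi_X hc) -PoszX' -h1; apply: (chi_dvd hc).
rewrite -eqz_mod_dvd; apply/eqP; rewrite !modz_nat; congr Posz; exact: e.
Qed.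

Lemma chi_norm q chi (t : nat) : prime q -> dirichlet_char q chi -> coprime t q ->
  chi t * (chi t)^* = 1.
Proof.
move=> pq hc cop; rewrite -normCK.
have := chi_fermat pq hc cop => /(congr1 (fun z => `|z|)).
rewrite normrX normr1 => /eqP; rewrite pexpr_eq1 ?normr_ge0 //; last first.
  by have := prime_gt1 pq; case: q {pq hc cop}.
by move/eqP ->; rewrite expr1n.
Qed.

Definition FF (chi1 chi2 : int -> algC) (a b c d : int) : algC :=
  (chi1 (a ^+ 5 + b ^+ 5 - c ^+ 5 - d ^+ 5))^*
      * (chi2 (a ^+ 5 + b ^+ 5 - c ^+ 5 - d ^+ 5))^*
      * (chi1 (a + b - c - d) * chi2 (a + b - c - d)).

Lemma FF_cong q chi1 chi2 (a b c d a' b' c' d' : int) :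
  dirichlet_char q chi1 -> dirichlet_char q chi2 ->
  (q%:Z %| a - a')%Z -> (q%:Z %| b - b')%Z -> (q%:Z %| c - c')%Z -> (q%:Z %| d - d')%Z ->
  FF chi1 chi2 a b c d = FF chi1 chi2 a' b' c' d'.
Proof.
move=> h1 h2 ha hb hc hd.
have hX : (q%:Z %| (a ^+ 5 + b ^+ 5 - c ^+ 5 - d ^+ 5) - (a' ^+ 5 + b' ^+ 5 - c' ^+ 5 - d' ^+ 5))%Z.
  have -> : (a ^+ 5 + b ^+ 5 - c ^+ 5 - d ^+ 5) - (a' ^+ 5 + b' ^+ 5 - c' ^+ 5 - d' ^+ 5)
    = (a ^+ 5 - a' ^+ 5) + (b ^+ 5 - b' ^+ 5) - (c ^+ 5 - c' ^+ 5) - (d ^+ 5 - d' ^+ 5) by ring.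
  by apply: rpredB; [apply: rpredB; [apply: rpredD|]|]; apply: dvd_poly.
have hY : (q%:Z %| (a + b - c - d) - (a' + b' - c' - d'))%Z.
  have -> : (a + b - c - d) - (a' + b' - c' - d')
    = (a - a') + (b - b') - (c - c') - (d - d') by ring.
  by apply: rpredB; [apply: rpredB; [apply: rpredD|]|].
by rewrite /FF (chi_dvd h1 hX) (chi_dvd h2 hX) (chi_dvd h1 hY) (chi_dvd h2 hY).
Qed.

Lemma FF_scale q chi1 chi2 (t a b c d : int) :
  dirichlet_char q chi1 -> dirichlet_char q chi2 ->
  FF chi1 chi2 (t * a) (t * b) (t * c) (t * d) =
  (chi1 t)^* ^+ 5 * (chi2 t)^* ^+ 5 * chi1 t * chi2 t * FF chi1 chi2 a b c d.
Proof.
move=> h1 h2; rewrite /FF.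
have -> : (t * a) ^+ 5 + (t * b) ^+ 5 - (t * c) ^+ 5 - (t * d) ^+ 5
  = t ^+ 5 * (a ^+ 5 + b ^+ 5 - c ^+ 5 - d ^+ 5) by ring.
have -> : t * a + t * b - t * c - t * d = t * (a + b - c - d) by ring.
case: (h1) => m1 _ _ _; case: (h2) => m2 _ _ _.
rewrite !m1 !m2 !rmorphM /=; ring.
Qed.

From Stdlib Require Import FunctionalExtensionality.

Theorem lemma2p4 (p : nat) (chi1 chi2 : int -> algC) :
  prime p -> odd p -> (p %% 4 = 3)%N ->
  dirichlet_char p chi1 -> dirichlet_char p chi2 ->
  odd_char chi1 -> odd_char chi2 ->
  (fun x => chi1 x * chi2 x) <> principal_char p ->
  \sum_(a < p) \sum_(b < p) \sum_(c < p) \sum_(d < p)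
     ((chi1 ((a%:Z) ^+ 5 + (b%:Z) ^+ 5 - (c%:Z) ^+ 5 - (d%:Z) ^+ 5))^*
      * (chi2 ((a%:Z) ^+ 5 + (b%:Z) ^+ 5 - (c%:Z) ^+ 5 - (d%:Z) ^+ 5))^*
      * (chi1 (a%:Z + b%:Z - c%:Z - d%:Z) * chi2 (a%:Z + b%:Z - c%:Z - d%:Z)))
  = 0.
Proof.
move=> pp oddp p4 h1 h2 o1 o2 hne.
have p0 : (0 < p)%N := prime_gt0 pp.
set S := LHS.
have Seq : S = \sum_(a < p) \sum_(b < p) \sum_(c < p) \sum_(d < p)
   FF chi1 chi2 a b c d by [].
have modP : forall (t a : nat), (p%:Z %| ((t * a) %% p)%N%:Z - t%:Z * a%:Z)%Z.
  move=> t a; rewrite -eqz_mod_dvd -modz_nat PoszM modz_mod //.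
have key : forall t : nat, coprime t p ->
   S = (chi1 t)^* ^+ 5 * (chi2 t)^* ^+ 5 * chi1 t * chi2 t * S.
  move=> t cop; rewrite Seq mulr_sumr.
  rewrite (reidx (fun a => \sum_(b<p)\sum_(c<p)\sum_(d<p) FF chi1 chi2 a b c d) p0 cop).
  apply: eq_bigr => a _; rewrite mulr_sumr.
  rewrite (reidx (fun b => \sum_(c<p)\sum_(d<p) FF chi1 chi2 ((t * a) %% p)%N b c d) p0 cop).
  apply: eq_bigr => b _; rewrite mulr_sumr.
  rewrite (reidx (fun c => \sum_(d<p) FF chi1 chi2 ((t * a) %% p)%N ((t * b) %% p)%N c d) p0 cop).
  apply: eq_bigr => c _; rewrite mulr_sumr.
  rewrite (reidx (fun d => FF chi1 chi2 ((t * a) %% p)%N ((t * b) %% p)%N ((t * c) %% p)%N d) p0 cop).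
  apply: eq_bigr => d _.
  rewrite (FF_cong h1 h2 (modP t a) (modP t b) (modP t c) (modP t d)).
  by rewrite (FF_scale _ _ _ _ _ h1 h2).
have [->//|Snz] := eqVneq S 0.
exfalso; apply: hne.
have u1 : forall t : nat, coprime t p -> chi1 t * chi2 t = 1.
  move=> t cop.
  set u := chi1 t * chi2 t.
  have w1 : (chi1 t)^* ^+ 5 * (chi2 t)^* ^+ 5 * chi1 t * chi2 t = 1.
    apply/eqP; rewrite -subr_eq0; apply/eqP.
    apply: (mulIf Snz); rewrite mul0r mulrBl mul1r -key //; exact: subrr.
  have n1 := chi_norm pp h1 cop; have n2 := chi_norm pp h2 cop.
  have u4 : u ^+ 4 = 1.
    have : ((chi1 t)^* * (chi2 t)^*) ^+ 4 = 1.
      rewrite -w1; transitivity (((chi1 t)^* * (chi2 t)^*) ^+ 4 * (chi1 t * (chi1 t)^*) * (chi2 t * (chi2 t)^*)).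
        by rewrite n1 n2 !mulr1.
      ring.
    by move=> /(congr1 (fun z => z^* )); rewrite rmorphXn rmorphM /= !conjCK rmorph1.
  have uf : u ^+ p.-1 = 1 by rewrite exprMn (chi_fermat pp h1 cop) (chi_fermat pp h2 cop) mulr1.
  set k := (p %/ 4)%N.
  have pe : p.-1 = (4 * k + 2)%N by rewrite {1}(divn_eq p 4) p4; lia.
  have u2 : u ^+ 2 = 1 by move: uf; rewrite pe exprD exprM u4 expr1n mul1r.
  have tpos : (0 < t)%N.
    case: t cop {u u4 uf u2 w1 n1 n2} => // /eqP; rewrite gcd0n => e.
    by move: pp; rewrite e.
  set x := (t ^ (2 * k + 1))%N.
  have xpos : (0 < x)%N by rewrite expn_gt0 tpos.
  have xx : (p %| (x - 1) * (x + 1))%N.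
    have e := Euler_exp_totient cop; rewrite totient_prime // pe in e.
    have -> : ((x - 1) * (x + 1) = t ^ (4 * k + 2) - 1)%N.
      have -> : (t ^ (4 * k + 2) = x * x)%N.
        by rewrite /x -expnD; congr expn; lia.
      rewrite mulnBl mul1n mulnDr muln1; lia.
    rewrite -eqn_mod_dvd ?expn_gt0 ?tpos //; apply/eqP; rewrite e modn_small //.
    exact: prime_gt1.
  have cx : chi1 x * chi2 x = 1.
    move: xx; rewrite Euclid_dvdM // => /orP [] hd.
    - have hd' : (p%:Z %| x%:Z - 1)%Z by rewrite subzn.
      case: (h1) => _ _ e1 _; case: (h2) => _ _ e2 _.
      by rewrite (chi_dvd h1 hd') (chi_dvd h2 hd') e1 e2 mulr1.
    - have hd' : (p%:Z %| x%:Z - (-1))%Z by rewrite opprK -PoszD.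
      by rewrite (chi_dvd h1 hd') (chi_dvd h2 hd') o1 o2 mulrNN mulr1.
  have um : u ^+ (2 * k + 1) = 1.
    by rewrite exprMn -(chi_X h1) -(chi_X h2) -PoszX'.
  have : u ^+ (2 * k + 2) = 1.
    have -> : (2 * k + 2 = 2 * k.+1)%N by lia.
    by rewrite exprM u2 expr1n.
  have -> : (2 * k + 2 = (2 * k + 1).+1)%N by lia.
  by rewrite exprSr um mul1r.
apply: functional_extensionality => n; rewrite /principal_char.
case: (h1) => _ _ _ z1; case: (h2) => _ _ _ z2.
case: ifP => cop; last by rewrite (proj2 (z1 n)) ?mul0r ?cop.
have pz : p%:Z != 0 by rewrite eqz_nat -lt0n.
set t := `|(n %% p%:Z)%Z|%N.
have ht : t%:Z = (n %% p%:Z)%Z by rewrite gez0_abs // modz_ge0.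
rewrite (chi_modz h1 n) (chi_modz h2 n) -ht; apply: u1.
have : chi1 t != 0.
  rewrite ht -(chi_modz h1); apply/eqP => /z1; by rewrite cop.
by apply: contraR => nc; apply/eqP; apply/z1.
Qed.
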